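(* Let $(M,g,S)$, $p$, $u$, $\varphi$, $\beta_3$ and $e_1,e_2$ be as in the context. Give each $v\in\beta_3$ coordinates $(x,y)$ by $v=xe_1+ye_2$. For $a\in\mathbb R$, the circle $k_3=\{v\in\beta_3:\tilde g(v,v)=a\}$ has the equation $$\frac{2\cos\varphi-1}{1-\cos\varphi}\,x^2+\frac{2\cos\varphi+1}{1+\cos\varphi}\,y^2=a.$$
   Context: $M$ is a 4-dimensional differentiable manifold with a positive definite metric $g$ and a tensor field $S$ of type $(1,1)$ whose components in some local coordinate system form the matrix with rows $(0,1,0,0)$, $(0,0,1,0)$, $(0,0,0,1)$, $(-1,0,0,0)$; hence $S^4=-\mathrm{id}$, and $g(Su,Sv)=g(u,v)$ for all vector fields $u,v$. The associated metric is $\tilde g(u,v)=g(u,Sv)+g(Su,v)$. Here $p\in M$, $u\in T_pM$ is a $g$-unit vector such that $\{u,Su,S^2u,S^3u\}$ is a basis of $T_pM$, $\varphi=\angle(u,Su)$ with respect to $g$ (so $\cos\varphi=g(u,Su)$; known: $\frac{\pi}{4}<\varphi<\frac{3\pi}{4}$), $\beta_3=\mathrm{span}\{u,S^3u\}$, and $e_1=\frac{1}{\sqrt{2(1-\cos\varphi)}}(u+S^3u)$, $e_2=\frac{1}{\sqrt{2(1+\cos\varphi)}}(-u+S^3u)$ (a $g$-orthonormal basis of $\beta_3$). *)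

(* Defs.v *)
From HB Require Import structures.
From mathcomp Require Import all_boot all_order all_algebra.
From mathcomp Require Import all_classical all_reals all_analysis.
Set Implicit Arguments. Unset Strict Implicit. Unset Printing Implicit Defensive.
Import Order.TTheory GRing.Theory Num.Theory.
Local Open Scope ring_scope.

(* Tangent space T_pM is modelled by column vectors 'cV[R]_4 in the local
   coordinate basis (d/dx^1, ..., d/dx^4). *)

(* The component matrix of S: rows (0,1,0,0),(0,0,1,0),(0,0,0,1),(-1,0,0,0);
   S acts on column vectors by  S v = Smx *m v. *)
Definition Smx {R : ringType} : 'M[R]_4 :=
  \matrix_(i < 4, j < 4)
    (if (i < 3)%N then ((j : nat) == i.+1)%:R else - ((j : nat) == 0%N)%:R).

Definition Sop {R : ringType} (v : 'cV[R]_4) : 'cV[R]_4 := Smx *m v.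

Definition gform {R : ringType} (G : 'M[R]_4) (u v : 'cV[R]_4) : R :=
  (u^T *m G *m v) 0 0.

Definition pos_def_metric {R : numDomainType} (G : 'M[R]_4) : Prop :=
  G^T = G /\ forall v : 'cV[R]_4, v != 0 -> 0 < gform G v v.

Definition gtilde {R : ringType} (G : 'M[R]_4) (u v : 'cV[R]_4) : R :=
  gform G u (Sop v) + gform G (Sop u) v.

(* {u, Su, S^2u, S^3u} is a basis of T_pM: the 4x4 matrix with these rows
   (transposed column vectors) has full row rank. *)
Definition S_basis {R : fieldType} (u : 'cV[R]_4) : bool :=
  row_free (\matrix_(i < 4) ((Smx ^+ i *m u)^T)).

(* Main.v *)
Set Warnings "-all".
Require Import Defs.
From HB Require Import structures.
From mathcomp Require Import all_boot all_order all_algebra.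
From mathcomp Require Import all_classical all_reals all_analysis.
From mathcomp Require Import ring lra.
Import Order.TTheory GRing.Theory Num.Theory.
Local Open Scope ring_scope.

Section H.
Variable R : realType.
Implicit Types (G : 'M[R]_4) (x y w : 'cV[R]_4).

Lemma Smx4 : Smx *m (Smx *m (Smx *m Smx)) = - 1%:M :> 'M[R]_4.
Proof.
apply/matrixP => i j.
do 4 (rewrite ?mxE ?big_ord_recr ?big_ord0 /=).
case: i => [[|[|[|[|i]]]] Hi] //=; case: j => [[|[|[|[|j]]]] Hj] //=; rewrite /= ?mxE /=; try ring.
Qed.

Lemma S4 x : Sop (Sop (Sop (Sop x))) = - x.
Proof.
rewrite /Sop !mulmxA.
have -> : Smx *m Smx *m Smx *m Smx = - 1%:M :> 'M[R]_4 by rewrite -!mulmxA Smx4.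
by rewrite mulNmx mul1mx.
Qed.


Lemma SopL a b x y : Sop (a *: x + b *: y) = a *: Sop x + b *: Sop y.
Proof. by rewrite /Sop mulmxDr !scalemxAr. Qed.

Lemma gL G a b x y w : gform G (a *: x + b *: y) w = a * gform G x w + b * gform G y w.
Proof. by rewrite /gform linearD /= !linearZ /= !mulmxDl -!scalemxAl !mxE. Qed.

Lemma gR G a b x y w : gform G w (a *: x + b *: y) = a * gform G w x + b * gform G w y.
Proof. by rewrite /gform mulmxDr -!scalemxAr !mxE. Qed.

Lemma gsym G x y : G^T = G -> gform G x y = gform G y x.
Proof.
move=> hG; rewrite /gform.
have -> : (y^T *m G *m x) 0 0 = ((y^T *m G *m x)^T) 0 0 by rewrite [RHS]mxE.
by rewrite !trmx_mul trmxK hG mulmxA.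
Qed.
End H.
Lemma gN (R : realType) (G : 'M[R]_4) (w x : 'cV[R]_4) : gform G w (- x) = - gform G w x.
Proof. by rewrite /gform mulmxN mxE. Qed.

Lemma sq_inv_sqrt (R : realType) (z : R) : 0 <= z -> 2 * ((Num.sqrt (2 * z))^-1) ^+ 2 = z^-1.
Proof.
move=> hz; rewrite exprVn sqr_sqrtr; last by rewrite mulr_ge0.
by rewrite invfM mulrA divff ?mul1r // pnatr_eq0.
Qed.

Theorem theorem5p9 (R : realType) (G : 'M[R]_4) (u : 'cV[R]_4) (phi : R) :
  pos_def_metric G ->
  (forall v w : 'cV[R]_4, gform G (Sop v) (Sop w) = gform G v w) ->
  gform G u u = 1 ->
  S_basis u ->
  0 <= phi <= pi ->
  cos phi = gform G u (Sop u) ->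
  pi / 4 < phi < 3 * pi / 4 ->
  let S3u := Sop (Sop (Sop u)) in
  let e1 := (Num.sqrt (2 * (1 - cos phi)))^-1 *: (u + S3u) in
  let e2 := (Num.sqrt (2 * (1 + cos phi)))^-1 *: (- u + S3u) in
  forall a x y : R,
    let v := x *: e1 + y *: e2 in
    gtilde G v v = a <->
    (2 * cos phi - 1) / (1 - cos phi) * x ^+ 2
      + (2 * cos phi + 1) / (1 + cos phi) * y ^+ 2 = a.
Proof.
move=> [hG _] hinv hu1 _ _ hc _ S3u e1 e2 a x y v.
set c := cos phi.
set p := (Num.sqrt (2 * (1 - c)))^-1.
set q := (Num.sqrt (2 * (1 + c)))^-1.
have hp : (1 - c)^-1 = 2 * p ^+ 2 by rewrite sq_inv_sqrt // subr_ge0 cos_le1.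
have hq : (1 + c)^-1 = 2 * q ^+ 2.
  by rewrite sq_inv_sqrt // -lerBlDl sub0r cos_geN1.
set s1 := Sop u; set s2 := Sop s1; set s3 := Sop s2.
have hs4 : Sop s3 = - u by rewrite /s3 /s2 /s1 S4.
have hv : v = (x * p - y * q) *: u + (x * p + y * q) *: s3.
  rewrite /v /e1 /e2 /S3u -/c -/p -/q -/s1 -/s2 -/s3; move: (s3) => w.
  apply/matrixP => i j; rewrite !mxE; ring.
have hSv : Sop v = (x * p - y * q) *: s1 + (x * p + y * q) *: (- u).
  by rewrite hv SopL hs4.
have g33 : gform G s3 s3 = 1 by rewrite /s3 /s2 /s1 !hinv.
have hb : gform G u s2 = 0.
  have : gform G u s2 = - gform G u s2.
    by rewrite -[LHS]hinv -[LHS]hinv -/s3 hs4 gN gsym.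
  move=> h; lra.
have g31 : gform G s3 s1 = 0 by rewrite /s3 hinv gsym.
have g3u : gform G s3 u = - c.
  by rewrite gsym // -hinv hs4 gN gsym // -hc.
have gt : gtilde G v v = 2 * gform G v (Sop v).
  rewrite /gtilde [gform G (Sop v) v]gsym //; ring.
rewrite gt {1}hv hSv !gL !gR !gN g31 g3u hu1 -hc.
rewrite -/c /= hp hq.
have -> : 2 * ((x * p - y * q) * ((x * p - y * q) * c + (x * p + y * q) * - 1) +
    (x * p + y * q) * ((x * p - y * q) * 0 + (x * p + y * q) * - - c)) =
   (2 * c - 1) * (2 * p ^+ 2) * x ^+ 2 + (2 * c + 1) * (2 * q ^+ 2) * y ^+ 2 by ring.
by [].
Qed.
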